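(* Let $\psi\colon\mathcal B\to\mathcal A$ be a quasi-isomorphism of DGAs (a DGA morphism inducing an isomorphism $\psi^*$ in cohomology). (1) Suppose $a,b_1,\dots,b_n\in\mathcal A$ are closed, $|a|$ is even and each $a\wedge b_i$ is exact, so that $\langle a;b_1,\dots,b_n\rangle$ is defined, and let $a',b_i'\in\mathcal B$ be closed elements with $[\psi(a')]=[a]$ and $[\psi(b_i')]=[b_i]$. Then $\langle a';b_1',\dots,b_n'\rangle$ is defined in $\mathcal B$ and $\psi^*(\langle a';b_1',\dots,b_n'\rangle)=\langle a;b_1,\dots,b_n\rangle$. (2) Conversely, if $\langle a';b_1',\dots,b_n'\rangle$ is a defined $a'$-Massey product in $\mathcal B$ and $a=\psi(a')$, $b_i=\psi(b_i')$, then $\psi^*(\langle a';b_1',\dots,b_n'\rangle)=\langle a;b_1,\dots,b_n\rangle$.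
   Context: A DGA is a graded-commutative differential graded algebra over $\mathbb R$; $|x|$ denotes degree and $\overline{x}=(-1)^{|x|}x$. Given closed $a,b_1,\dots,b_n$ with $|a|$ even and each $a\wedge b_i$ exact, the $a$-Massey product is $\langle a;b_1,\dots,b_n\rangle=\{[\sum_{i=1}^n\overline{\xi_1}\wedge\cdots\wedge\overline{\xi_{i-1}}\wedge b_i\wedge\xi_{i+1}\wedge\cdots\wedge\xi_n] : d\xi_i=a\wedge b_i\}$, a subset of cohomology. *)

(* Defs.v *)
From HB Require Import structures.
From mathcomp Require Import all_boot all_order all_algebra.
From mathcomp Require Import Rstruct.
Set Implicit Arguments. Unset Strict Implicit. Unset Printing Implicit Defensive.
Import Order.TTheory GRing.Theory Num.Theory.
Local Open Scope ring_scope.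

Notation RR := Rdefinitions.R.

Definition sgnz (p : int) : RR := (-1) ^+ `|p|%N.

(* A graded-commutative differential graded algebra over the reals,
   nonnegatively graded (A^n = 0 for n < 0).  The carrier is the total
   algebra  (+)_n A^n ; [homog D n] is the subspace A^n. *)
Record dga := DGA {
  dga_car :> algType RR;
  homog : int -> dga_car -> Prop;
  dd : dga_car -> dga_car;
  homog0 : forall n, homog n 0;
  homogD : forall n x y, homog n x -> homog n y -> homog n (x + y);
  homogZ : forall n (c : RR) x, homog n x -> homog n (c *: x);
  homog_neg : forall n x, n < 0 -> homog n x -> x = 0;
  homog_span : forall x : dga_car, exists s : seq (int * dga_car),
      (forall u, u \in s -> homog u.1 u.2) /\ x = \sum_(u <- s) u.2;
  homog_indep : forall (k : nat) (deg : 'I_k -> int) (f : 'I_k -> dga_car),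
      injective deg -> (forall i, homog (deg i) (f i)) ->
      \sum_(i < k) f i = 0 -> forall i, f i = 0;
  homog1 : homog 0 1;
  homogM : forall p q x y, homog p x -> homog q y -> homog (p + q) (x * y);
  gcomm : forall p q x y, homog p x -> homog q y ->
      x * y = sgnz (p * q) *: (y * x);
  dd_linear : linear dd;
  dd_homog : forall n x, homog n x -> homog (n + 1) (dd x);
  dd_dd : forall x, dd (dd x) = 0;
  dd_leibniz : forall p x y, homog p x ->
      dd (x * y) = dd x * y + sgnz p *: (x * dd y)
}.

Record dga_hom (B A : dga) (f : B -> A) : Prop := DGAHom {
  hom_linear : linear f;
  hom_mul : forall x y, f (x * y) = f x * f y;
  hom_one : f 1 = 1;
  hom_homog : forall n x, homog n x -> homog n (f x);
  hom_dd : forall x, f (dd x) = dd (f x)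
}.

Definition closed_in (D : dga) (n : int) (x : D) : Prop := homog n x /\ dd x = 0.
Definition exact_in (D : dga) (n : int) (x : D) : Prop :=
  homog n x /\ exists z : D, homog (n - 1) z /\ dd z = x.
Definition cohom (D : dga) (n : int) (x y : D) : Prop := exact_in n (x - y).

(* psi : B -> A is a quasi-isomorphism: a DGA morphism such that
   psi^* : H^n(B) -> H^n(A) is bijective for every n *)
Definition quasi_iso (B A : dga) (psi : B -> A) : Prop :=
  dga_hom psi /\
  forall n : int,
    (forall x : B, closed_in n x -> exact_in n (psi x) -> exact_in n x) /\
    (forall y : A, closed_in n y -> exists x : B, closed_in n x /\ cohom n (psi x) y).

Definition massey_defined (D : dga) (p : int) (n : nat) (q : 'I_n -> int)
    (a : D) (b : 'I_n -> D) : Prop :=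
  ~~ odd `|p|%N /\ closed_in p a /\ (forall i, closed_in (q i) (b i)) /\
  (forall i, exact_in (p + q i) (a * b i)).

Definition massey_deg (p : int) (n : nat) (q : 'I_n -> int) : int :=
  \sum_(j < n) (p + q j - 1) - p + 1.

Definition massey_value (D : dga) (p : int) (n : nat) (q : 'I_n -> int)
    (b xi : 'I_n -> D) : D :=
  \sum_(i < n)
    (\prod_(j < n | (j < i)%N) (sgnz (p + q j - 1) *: xi j)) * b i *
    (\prod_(j < n | (i < j)%N) xi j).

Definition massey_elem (D : dga) (p : int) (n : nat) (q : 'I_n -> int)
    (a : D) (b : 'I_n -> D) (z : D) : Prop :=
  closed_in (massey_deg p q) z /\
  exists xi : 'I_n -> D,
    (forall i, homog (p + q i - 1) (xi i) /\ dd (xi i) = a * b i) /\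
    cohom (massey_deg p q) z (massey_value p q b xi).

(* psi^*(S') = S for subsets of H^m given by cohomology-invariant predicates
   of representatives *)
Definition cohom_image_eq (B A : dga) (psi : B -> A) (m : int)
    (S' : B -> Prop) (S : A -> Prop) : Prop :=
  (forall z' : B, S' z' -> S (psi z')) /\
  (forall z : A, S z -> exists z' : B, S' z' /\ cohom m (psi z') z).

(* Main.v *)
Require Import Defs.
From mathcomp Require Import all_boot all_order all_algebra.
From mathcomp Require Import zify ssrAC.
From mathcomp Require Import Rstruct.
Set Implicit Arguments. Unset Strict Implicit. Unset Printing Implicit Defensive.
Import Order.TTheory GRing.Theory Num.Theory.
Local Open Scope ring_scope.

Lemma oddD (x y : int) : odd (absz (x + y)) = odd (absz x) (+) odd (absz y).
Proof.
have := modn2 (absz (x + y)). have := modn2 (absz x). have := modn2 (absz y).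
case: (odd _); case: (odd _); case: (odd _) => /=; lia.
Qed.

Lemma sgnzE x : sgnz x = (-1 : RR) ^+ odd (absz x).
Proof. by rewrite /sgnz signr_odd. Qed.

Lemma sgnzD x y : sgnz (x + y) = sgnz x * sgnz y.
Proof. by rewrite !sgnzE oddD signr_addb. Qed.

Lemma sgnzN x : sgnz (- x) = sgnz x.
Proof. by rewrite /sgnz abszN. Qed.

Lemma sgnz1 : sgnz 1 = -1.
Proof. by rewrite /sgnz expr1. Qed.

Lemma sgnz0 : sgnz 0 = 1.
Proof. by rewrite /sgnz expr0. Qed.

Lemma sgnz_even x : ~~ odd (absz x) -> sgnz x = 1.
Proof. by move=> h; rewrite sgnzE (negbTE h). Qed.

Lemma sgnz_sq x : sgnz x * sgnz x = 1.
Proof. by rewrite sgnzE -signr_addb addbb. Qed.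

Lemma sgnzMeven x y : ~~ odd (absz y) -> sgnz (x * y) = 1.
Proof. by move=> h; rewrite sgnzE abszM oddM (negbTE h) andbF. Qed.

Lemma sgnzMeven_l x y : ~~ odd (absz x) -> sgnz (x * y) = 1.
Proof. by move=> h; rewrite mulrC sgnzMeven. Qed.

Lemma sgnzModd x y : odd (absz y) -> sgnz (x * y) = sgnz x.
Proof. by move=> h; rewrite !sgnzE abszM oddM h andbT. Qed.

Lemma sgnzModd_l x y : odd (absz x) -> sgnz (x * y) = sgnz y.
Proof. by move=> h; rewrite mulrC sgnzModd. Qed.

Lemma odd_even1 p : ~~ odd (absz p) -> odd (absz (p - 1)).
Proof. by move=> h; rewrite oddD abszN /= (negbTE h). Qed.

Lemma sgnz_pm x : sgnz x = 1 \/ sgnz x = -1.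
Proof. rewrite sgnzE; case: (odd _); [right|left]; by rewrite ?expr1 ?expr0. Qed.

Section Basic.
Variable D : dga.
Implicit Types x y z : D.

Lemma homog_eq m n x : m = n -> homog m x -> homog n x.
Proof. by move=> ->. Qed.

Lemma ddDZ c x y : dd (c *: x + y) = c *: dd x + dd y.
Proof. exact: (@dd_linear D). Qed.

Lemma dd0 : dd (0 : D) = 0.
Proof.
have := ddDZ 1 0 0; rewrite !scale1r addr0 => h.
by apply: (addrI (dd (0:D))); rewrite addr0 -h.
Qed.

Lemma ddD x y : dd (x + y) = dd x + dd y.
Proof. by rewrite -[x]scale1r ddDZ !scale1r. Qed.

Lemma ddZ c x : dd (c *: x) = c *: dd x.
Proof. by rewrite -[c *: x]addr0 ddDZ dd0 addr0. Qed.

Lemma ddN x : dd (- x) = - dd x.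
Proof. by rewrite -scaleN1r ddZ scaleN1r. Qed.

Lemma ddB x y : dd (x - y) = dd x - dd y.
Proof. by rewrite ddD ddN. Qed.

Lemma homogN n x : homog n x -> homog n (- x).
Proof. by move=> h; rewrite -scaleN1r; apply: homogZ. Qed.

Lemma homogB n x y : homog n x -> homog n y -> homog n (x - y).
Proof. by move=> hx hy; apply: homogD => //; apply: homogN. Qed.

Lemma homog_dd n x : homog (n - 1) x -> homog n (dd x).
Proof. by move=> h; apply: (homog_eq _ (dd_homog h)); rewrite subrK. Qed.

Lemma exact_dd n z : homog (n - 1) z -> exact_in n (dd z).
Proof. by move=> h; split; [exact: homog_dd | exists z]. Qed.

Lemma exactD n x y : exact_in n x -> exact_in n y -> exact_in n (x + y).
Proof.
move=> [hx [z [hz dz]]] [hy [w [hw dw]]]; split; first exact: homogD.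
by exists (z + w); rewrite ddD dz dw; split => //; apply: homogD.
Qed.

Lemma exactN n x : exact_in n x -> exact_in n (- x).
Proof.
move=> [hx [z [hz dz]]]; split; first exact: homogN.
by exists (- z); rewrite ddN dz; split => //; apply: homogN.
Qed.

Lemma exactB n x y : exact_in n x -> exact_in n y -> exact_in n (x - y).
Proof. by move=> hx hy; apply: exactD => //; apply: exactN. Qed.

Lemma exact0 n : exact_in n (0 : D).
Proof. by split; [exact: homog0 | exists 0; rewrite dd0; split => //; exact: homog0]. Qed.

Lemma sq_odd m x : odd (absz m) -> homog m x -> x * x = 0.
Proof.
move=> hm hx; have := gcomm hx hx; rewrite sgnzModd // sgnzE hm expr1 scaleN1r.
move=> /eqP; rewrite -addr_eq0 -mulr2n -scaler_nat scaler_eq0 pnatr_eq0 /=.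
by move/eqP.
Qed.

End Basic.

Lemma sgnzS x : sgnz (x + 1) = - sgnz x.
Proof. by rewrite sgnzD sgnz1 mulrN1. Qed.
Lemma sgnzP x : sgnz (x - 1) = - sgnz x.
Proof. by rewrite sgnzD sgnzN sgnz1 mulrN1. Qed.
Lemma sgnzBe x p : ~~ odd (absz p) -> sgnz (x - p) = sgnz x.
Proof. by move=> h; rewrite sgnzD sgnzN (sgnz_even h) mulr1. Qed.
Lemma sgnzV x p : ~~ odd (absz p) -> sgnz (x + 1 - p) = - sgnz x.
Proof. by move=> h; rewrite (sgnzBe _ h) sgnzS. Qed.

Lemma dd1 (D : dga) : dd (1 : D) = 0.
Proof.
have := dd_leibniz 1 (homog1 D); rewrite !mul1r mulr1 sgnz0 scale1r => h.
by apply: (addrI (dd (1:D))); rewrite addr0 -h.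
Qed.

Section Gen.
Variable D : dga.
Variable p : int.
Variable q : nat -> int.

Definition ee j := p + q j - 1.
Definition EE k := \sum_(j < k) ee j.
Definition PP (xi : nat -> D) k := \prod_(j < k) xi j.
Definition VV (b xi : nat -> D) k :=
  \sum_(i < k) (\prod_(j < i) (sgnz (ee j) *: xi j)) * b i * (\prod_(i.+1 <= j < k) xi j).

Lemma EE0 : EE 0 = 0. Proof. by rewrite /EE big_ord0. Qed.
Lemma EES k : EE k.+1 = EE k + ee k. Proof. by rewrite /EE big_ord_recr. Qed.
Lemma PP0 (xi : nat -> D) : PP xi 0 = 1. Proof. by rewrite /PP big_ord0. Qed.
Lemma PPS (xi : nat -> D) k : PP xi k.+1 = PP xi k * xi k. Proof. by rewrite /PP big_ord_recr. Qed.

Lemma prod_sgnz k : \prod_(j < k) sgnz (ee j) = sgnz (EE k).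
Proof.
elim: k => [|k IH].
  by rewrite big_ord0 EE0 sgnz0.
by rewrite big_ord_recr /= IH EES -sgnzD.
Qed.

Lemma barP (xi : nat -> D) k : \prod_(j < k) (sgnz (ee j) *: xi j) = sgnz (EE k) *: PP xi k.
Proof. by rewrite scaler_prod prod_sgnz. Qed.

Lemma VV0 (b xi : nat -> D) : VV b xi 0 = 0. Proof. by rewrite /VV big_ord0. Qed.

Lemma VVS (b xi : nat -> D) k : VV b xi k.+1 = VV b xi k * xi k + sgnz (EE k) *: (PP xi k * b k).
Proof.
rewrite /VV big_ord_recr /= big_geq // mulr1 barP -scalerAl; congr (_ + _).
rewrite mulr_suml; apply: eq_bigr => i _.
by rewrite big_nat_recr //= !mulrA.
Qed.

Lemma VV_ext (b xi b' xi' : nat -> D) k : (forall j, (j < k)%N -> b j = b' j /\ xi j = xi' j) ->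
  VV b xi k = VV b' xi' k /\ PP xi k = PP xi' k.
Proof.
elim: k => [|k IH] h; first by rewrite !VV0 !PP0.
have [h1 h2] := IH (fun j hj => h j (ltnW hj)).
have [hb hx] := h k (ltnSn k).
by rewrite !VVS !PPS h1 h2 hb hx.
Qed.

End Gen.

Lemma comm_even (D : dga) p (a : D) m x : ~~ odd (absz p) -> homog p a -> homog m x ->
  x * a = a * x.
Proof. by move=> hp ha hx; rewrite (gcomm hx ha) (sgnzMeven _ hp) scale1r. Qed.

Section Closed.
Variable D : dga.
Variable p : int.
Variable q : nat -> int.
Variable a : D.
Variables b xi : nat -> D.
Hypothesis hp : ~~ odd (absz p).
Hypothesis ha : homog p a.
Hypothesis hda : dd a = 0.
Hypothesis hb : forall j, homog (q j) (b j).
Hypothesis hdb : forall j, dd (b j) = 0.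
Hypothesis hxi : forall j, homog (ee p q j) (xi j).
Hypothesis hdxi : forall j, dd (xi j) = a * b j.

Lemma closedVV k : homog (EE p q k) (PP xi k) /\ homog (EE p q k + 1 - p) (VV p q b xi k) /\
  dd (PP xi k) = a * VV p q b xi k /\ dd (VV p q b xi k) = 0.
Proof.
elim: k => [|k [hP [hV [dP dV]]]].
  rewrite PP0 VV0 EE0 dd1 dd0 mulr0; split; first exact: homog1.
  by split => //; apply: homog0.
rewrite PPS VVS EES; split; first exact: homogM.
split.
  apply: homogD.
    by apply: (homog_eq _ (homogM hV (hxi k))); rewrite /ee; lia.
  by apply: homogZ; apply: (homog_eq _ (homogM hP (hb k))); rewrite /ee; lia.
split.
  rewrite (dd_leibniz _ hP) dP hdxi mulrDr mulrA -scalerAr; congr (_ + _ *: _).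
  by rewrite mulrA.
  by rewrite (comm_even hp ha hP) -mulrA.
rewrite ddD ddZ (dd_leibniz _ hV) (dd_leibniz _ hP) dV dP hdxi hdb.
rewrite mul0r add0r mulr0 scaler0 addr0 (sgnzV _ hp) mulrA (comm_even hp ha hV).
by rewrite -mulrA scaleNr addNr.
Qed.
End Closed.

Lemma addKAC (V : zmodType) (u x v y : V) : u + x + (v + y) - (u + v) = x + y.
Proof. by rewrite addrACA [_ + (x + y)]addrC addrK. Qed.

Section Pert.
Variable D : dga.
Variable p : int.
Variable q : nat -> int.
Variable a : D.
Variables b xi eta : nat -> D.
Hypothesis hp : ~~ odd (absz p).
Hypothesis ha : homog p a.
Hypothesis hda : dd a = 0.
Hypothesis hb : forall j, homog (q j) (b j).
Hypothesis hdb : forall j, dd (b j) = 0.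
Hypothesis hxi : forall j, homog (ee p q j) (xi j).
Hypothesis hdxi : forall j, dd (xi j) = a * b j.
Hypothesis heta : forall j, homog (ee p q j - 1) (eta j).

Let xi' j := xi j + dd (eta j).
Lemma pert_hxi' j : homog (ee p q j) (xi' j).
Proof. by apply: homogD => //; apply: homog_dd. Qed.
Lemma pert_hdxi' j : dd (xi' j) = a * b j.
Proof. by rewrite /xi' ddD dd_dd addr0. Qed.

Lemma pertVV k : exists W R, homog (EE p q k - p) W /\ homog (EE p q k - 1) R /\
  VV p q b xi' k - VV p q b xi k = dd W /\ PP xi' k - PP xi k = a * W + dd R.
Proof.
elim: k => [|k [W [R [hW [hR [eV eP]]]]]].
  exists 0, 0; rewrite !VV0 !PP0 dd0 mulr0 !subrr addr0.
  by split; [apply: homog0 | split; [apply: homog0 |]].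
have [hP [hV [dP dV]]] := closedVV hp ha hb hdb hxi hdxi k.
have [hP' [hV' [dP' dV']]] := closedVV hp ha hb hdb pert_hxi' pert_hdxi' k.
set P := PP xi k in hP dP eP *; set V := VV p q b xi k in hV dV eV *.
set P' := PP xi' k in hP' dP' eP *; set V' := VV p q b xi' k in hV' dV' eV *.
set s := sgnz (EE p q k).
exists (W * xi' k - s *: (V * eta k) + s *: (R * b k)).
exists (s *: (P * eta k) + R * xi' k).
rewrite !EES !PPS !VVS -/P -/V -/P' -/V'.
have eP2 : P' = P + (a * W + dd R) by rewrite -eP addrC subrK.
have eV2 : V' = V + dd W by rewrite -eV addrC subrK.
split.
  apply: homogD; last by apply: homogZ; apply: (homog_eq _ (homogM hR (hb k))); rewrite /ee; lia.
  apply: homogB; first by apply: (homog_eq _ (homogM hW (pert_hxi' k))); lia.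
  by apply: homogZ; apply: (homog_eq _ (homogM hV (heta k))); rewrite /ee; lia.
split.
  apply: homogD; last by apply: (homog_eq _ (homogM hR (pert_hxi' k))); lia.
  by apply: homogZ; apply: (homog_eq _ (homogM hP (heta k))); rewrite /ee; lia.
have hWa : W * a = a * W := comm_even hp ha hW.
have hRa : R * a = a * R := comm_even hp ha hR.
have hVa : V * a = a * V := comm_even hp ha hV.
have hPa : P * a = a * P := comm_even hp ha hP.
split.
  rewrite eV2 eP2 ddD ddB !ddZ (dd_leibniz _ hW) (dd_leibniz _ hV) (dd_leibniz _ hR).
  rewrite pert_hdxi' hdb dV mul0r add0r mulr0 scaler0 addr0.
  rewrite (sgnzBe _ hp) (sgnzV _ hp) -/s scalerA mulrN sgnz_sq scaleN1r opprK.
  rewrite mulrA hWa /xi' mulrDl [V * _]mulrDr -[V * xi k + _ + _]addrA mulrDl scalerDr addKAC.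
  by rewrite mulrDl scalerDr !addrA (ACl (2*3*1*4)).
rewrite eP2 ddD ddZ (dd_leibniz _ hP) (dd_leibniz _ hR) dP -/V pert_hdxi' (sgnzP) -/s.
rewrite scalerDr scalerA sgnz_sq scale1r.
rewrite mulrDl {1}/xi' mulrDr mulrDl.
rewrite [LHS](AC ((2*2)*1) ((1*5)*(2*(3*4)))) /= subrr add0r.
rewrite [a * (_ + _)]mulrDr [a * (_ - _)]mulrBr -!scalerAr !mulrA hRa scaleNr.
rewrite [RHS](AC (3*(2*2)) ((5*(1*6))*((2*4)*(3*7)))) /= addNr subrr !addr0.
by rewrite addrCA.
Qed.
End Pert.

Section Inv.
Variable D : dga.
Variable p : int.
Variable q : nat -> int.
Variables a alpha a' : D.
Variables b xi beta b' xi' : nat -> D.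
Hypothesis hp : ~~ odd (absz p).
Hypothesis ha : homog p a.
Hypothesis hda : dd a = 0.
Hypothesis hb : forall j, homog (q j) (b j).
Hypothesis hdb : forall j, dd (b j) = 0.
Hypothesis hxi : forall j, homog (ee p q j) (xi j).
Hypothesis hdxi : forall j, dd (xi j) = a * b j.
Hypothesis halpha : homog (p - 1) alpha.
Hypothesis hbeta : forall j, homog (q j - 1) (beta j).
Hypothesis ea' : a' = a + dd alpha.
Hypothesis eb' : forall j, b' j = b j + dd (beta j).
Hypothesis exi' : forall j, xi' j = xi j + alpha * b' j + a * beta j.

Lemma ha' : homog p a'.
Proof. by rewrite ea'; apply: homogD => //; apply: homog_dd. Qed.
Lemma hda' : dd a' = 0.
Proof. by rewrite ea' ddD hda dd_dd addr0. Qed.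
Lemma hb' j : homog (q j) (b' j).
Proof. by rewrite eb'; apply: homogD => //; apply: homog_dd. Qed.
Lemma hdb' j : dd (b' j) = 0.
Proof. by rewrite eb' ddD hdb dd_dd addr0. Qed.
Lemma hxi' j : homog (ee p q j) (xi' j).
Proof.
rewrite exi'; apply: homogD; first apply: homogD => //.
  by apply: (homog_eq _ (homogM halpha (hb' j))); rewrite /ee; lia.
by apply: (homog_eq _ (homogM ha (hbeta j))); rewrite /ee; lia.
Qed.
Lemma hdxi' j : dd (xi' j) = a' * b' j.
Proof.
rewrite exi' !ddD hdxi (dd_leibniz _ halpha) (dd_leibniz _ ha) hdb' hda mulr0 scaler0 addr0.
rewrite mul0r add0r (sgnz_even hp) scale1r ea' eb' mulrDl [a * (_ + _)]mulrDr -eb'.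
by rewrite addrAC -addrA.
Qed.


Lemma invVV k : exists W R, homog (EE p q k - p) W /\ homog (EE p q k - 1) R /\
  VV p q b' xi' k - VV p q b xi k = dd W /\
  PP xi' k - PP xi k = a' * W + alpha * VV p q b xi k + dd R.
Proof.
elim: k => [|k [W [R [hW [hR [eV eP]]]]]].
  exists 0, 0; rewrite !VV0 !PP0 dd0 !mulr0 !subrr !addr0.
  by split; [apply: homog0 | split; [apply: homog0 |]].
have [hP [hV [dP dV]]] := closedVV hp ha hb hdb hxi hdxi k.
have [hP' [hV' [dP' dV']]] := closedVV hp ha' hb' hdb' hxi' hdxi' k.
set P := PP xi k in hP dP eP *; set V := VV p q b xi k in hV dV eV dP eP *.
set P' := PP xi' k in hP' dP' eP *; set V' := VV p q b' xi' k in hV' dV' eV dP' *.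
set s := sgnz (EE p q k).
exists (W * xi' k + P * beta k + s *: (R * b' k)).
exists (R * xi' k - alpha * (P * beta k)).
rewrite !EES !PPS !VVS -/P -/V -/P' -/V'.
have eP2 : P' = P + (a' * W + alpha * V + dd R) by rewrite -eP addrC subrK.
have eV2 : V' = V + dd W by rewrite -eV addrC subrK.
split.
  apply: homogD; last by apply: homogZ; apply: (homog_eq _ (homogM hR (hb' k))); rewrite /ee; lia.
  apply: homogD; first by apply: (homog_eq _ (homogM hW (hxi' k))); lia.
  by apply: (homog_eq _ (homogM hP (hbeta k))); rewrite /ee; lia.
split.
  apply: homogB; first by apply: (homog_eq _ (homogM hR (hxi' k))); lia.
  by apply: (homog_eq _ (homogM halpha (homogM hP (hbeta k)))); rewrite /ee; lia.
have hWa : W * a' = a' * W := comm_even hp ha' hW.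
have hRa : R * a' = a' * R := comm_even hp ha' hR.
have hVa : V * a = a * V := comm_even hp ha hV.
have hPa : P * a = a * P := comm_even hp ha hP.
have hpo := odd_even1 hp.
have hVal : V * alpha = - s *: (alpha * V).
  by rewrite (gcomm hV halpha) (sgnzModd _ hpo) (sgnzV _ hp).
have hPal : P * alpha = s *: (alpha * P).
  by rewrite (gcomm hP halpha) (sgnzModd _ hpo).
have haa : alpha * alpha = 0 := sq_odd hpo halpha.
split.
  rewrite eV2 eP2 ddD ddD ddZ (dd_leibniz _ hW) (dd_leibniz _ hP) (dd_leibniz _ hR).
  rewrite hdxi' hdb' dP mulr0 scaler0 addr0 (sgnzBe _ hp) -/s mulrA hWa.
  have hL1 : V * xi' k = V * xi k + (- s) *: (alpha * V * b' k) + a * V * beta k.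
    by rewrite exi' !mulrDr !mulrA hVal hVa -scalerAl.
  have hL2 : (P + (a' * W + alpha * V + dd R)) * b' k = P * b k + P * dd (beta k) +
      a' * W * b' k + alpha * V * b' k + dd R * b' k.
    by rewrite mulrDl [in P * b' k]eb' mulrDr !mulrDl !addrA.
  rewrite mulrDl hL1 hL2 !scalerDr opprD !addrA.
  by rewrite (ACl ((((1*10)*(5*11))*(2*8))*4*7*3*6*9)) /= !subrr scaleNr addNr !add0r.
have hQ1 : P * xi' k = P * xi k + s *: (alpha * P * b k) + s *: (alpha * P * dd (beta k))
    + a' * P * beta k - dd alpha * P * beta k.
  rewrite exi' eb' ea' !mulrDr !mulrA hPal hPa -!scalerAl !mulrDl !addrA.
  by rewrite addrK.
have hQ2 : alpha * V * xi' k = alpha * V * xi k + alpha * a * V * beta k.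
  rewrite exi' !mulrDr !mulrA -[alpha * V * alpha]mulrA hVal -scalerAr mulrA haa.
  by rewrite mul0r scaler0 mul0r addr0 -[alpha * V * a]mulrA hVa mulrA.
rewrite eP2 mulrDl !mulrDl hQ1 hQ2.
rewrite ddB (dd_leibniz _ hR) (dd_leibniz _ halpha) (dd_leibniz _ hP) hdxi' dP.
rewrite (sgnzP) -/s (sgnzP p) (sgnz_even hp).
rewrite !mulrDr !scalerAr scaleN1r !scaleNr !mulrA hRa !opprD !opprK !addrA mulrN.
rewrite [LHS](ACl ((1*10)*2*3*4*5*6*7*8*9)) [RHS](ACl ((3*7)*5*10*2*8*1*4*9*6)) /=.
by rewrite !subrr !add0r.
Qed.
End Inv.

Definition ext n T (d : T) (f : 'I_n -> T) (j : nat) : T :=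
  oapp f d (insub j : option 'I_n).

Lemma ext_val n T (d : T) (f : 'I_n -> T) (i : 'I_n) : ext d f i = f i.
Proof. by rewrite /ext valK. Qed.

Lemma extP n j : (exists i : 'I_n, nat_of_ord i = j) \/
  (forall T (d : T) (f : 'I_n -> T), ext d f j = d).
Proof.
case: (ltnP j n) => h; first by left; exists (Ordinal h).
by right => T d f; rewrite /ext insubN // -leqNgt.
Qed.

Lemma massey_valueE (D : dga) p n (q : 'I_n -> int) (b xi : 'I_n -> D) :
  massey_value p q b xi = VV p (ext 0 q) (ext 0 b) (ext 0 xi) n.
Proof.
rewrite /massey_value /VV; apply: eq_bigr => i _.
congr (_ * _ * _); last first.
  rewrite big_geq_mkord; apply: eq_big => [j|j _]; first by [].
  by rewrite ext_val.
  by rewrite ext_val.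
rewrite (big_ord_narrow (ltnW (ltn_ord i))); apply: eq_bigr => j _.
by rewrite /ee -(ext_val 0 q (widen_ord _ j)) -(ext_val 0 xi (widen_ord _ j)).
Qed.

Lemma massey_degE p n (q : 'I_n -> int) : massey_deg p q = EE p (ext 0 q) n - p + 1.
Proof.
rewrite /massey_deg /EE; congr (_ - _ + _); apply: eq_bigr => i _.
by rewrite /ee ext_val.
Qed.

Lemma ext_hb (D : dga) n (q : 'I_n -> int) (b : 'I_n -> D) :
  (forall i, closed_in (q i) (b i)) ->
  forall j, homog (ext 0 q j) (ext 0 b j) /\ dd (ext 0 b j) = 0.
Proof.
move=> hb j; case: (extP n j) => [[i <-]|h]; first by rewrite !ext_val; exact: hb.
by rewrite !h dd0; split => //; apply: homog0.
Qed.

Lemma ext_hxi (D : dga) p n (q : 'I_n -> int) (a : D) (b xi : 'I_n -> D) :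
  (forall i, homog (p + q i - 1) (xi i) /\ dd (xi i) = a * b i) ->
  forall j, homog (ee p (ext 0 q) j) (ext 0 xi j) /\ dd (ext 0 xi j) = a * ext 0 b j.
Proof.
move=> hxi j; case: (extP n j) => [[i <-]|h]; first by rewrite /ee !ext_val; exact: hxi.
by rewrite !h dd0 mulr0; split => //; apply: homog0.
Qed.

Lemma value_closed (D : dga) p n (q : 'I_n -> int) (a : D) (b xi : 'I_n -> D) :
  ~~ odd (absz p) -> closed_in p a -> (forall i, closed_in (q i) (b i)) ->
  (forall i, homog (p + q i - 1) (xi i) /\ dd (xi i) = a * b i) ->
  closed_in (massey_deg p q) (massey_value p q b xi).
Proof.
move=> hp [ha hda] hb hxi.
have hbe := ext_hb hb; have hxe := ext_hxi hxi.
have [_ [hV [_ dV]]] := closedVV hp ha (fun j => (hbe j).1) (fun j => (hbe j).2)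
   (fun j => (hxe j).1) (fun j => (hxe j).2) n.
rewrite massey_valueE massey_degE; split => //.
by apply: (homog_eq _ hV); lia.
Qed.

Lemma inv_elem (D : dga) p n (q : 'I_n -> int) (a1 a2 : D) (b1 b2 : 'I_n -> D) z :
  ~~ odd (absz p) -> closed_in p a1 -> exact_in p (a2 - a1) ->
  (forall i, closed_in (q i) (b1 i)) -> (forall i, exact_in (q i) (b2 i - b1 i)) ->
  massey_elem p q a1 b1 z -> massey_elem p q a2 b2 z.
Proof.
move=> hp [ha hda] [_ [al [hal eal]]] hb hbb [hz [xi [hxi hcz]]].
have : forall i, exists w, homog (q i - 1) w /\ dd w = b2 i - b1 i.
  by move=> i; case: (hbb i).
case/fin_all_exists => be hbe.
pose xi2 := fun i => xi i + al * b2 i + a1 * be i.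
have hb1e := ext_hb hb; have hxe := ext_hxi hxi.
have hbee : forall j, homog (ext 0 q j - 1) (ext 0 be j).
  move=> j; case: (extP n j) => [[i <-]|h]; first by rewrite !ext_val; exact: (hbe i).1.
  by rewrite !h; apply: homog0.
have eb2 : forall j, ext 0 b2 j = ext 0 b1 j + dd (ext 0 be j).
  move=> j; case: (extP n j) => [[i <-]|h]; last by rewrite !h dd0 addr0.
  by rewrite !ext_val (hbe i).2 addrC subrK.
have exi2 : forall j, ext 0 xi2 j = ext 0 xi j + al * ext 0 b2 j + a1 * ext 0 be j.
  move=> j; case: (extP n j) => [[i <-]|h]; last by rewrite !h !mulr0 !addr0.
  by rewrite !ext_val.
have ea2 : a2 = a1 + dd al by rewrite eal addrC subrK.
split => //; exists xi2; split.
  move=> i; rewrite -!(ext_val 0 xi2 i) -(ext_val 0 b2 i); split.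
    by apply: (homog_eq _ (hxi' hp ha (fun j => (hb1e j).1) (fun j => (hxe j).1)
      hal hbee eb2 exi2 i)); rewrite /ee ext_val.
  exact: (hdxi' hp ha hda (fun j => (hb1e j).2) (fun j => (hxe j).2) hal ea2 eb2 exi2 i).
have [W [R [hW [_ [eV _]]]]] := invVV hp ha hda (fun j => (hb1e j).1) (fun j => (hb1e j).2)
   (fun j => (hxe j).1) (fun j => (hxe j).2) hal hbee ea2 eb2 exi2 n.
move: hcz; rewrite /cohom !massey_valueE massey_degE => hcz.
have -> : z - VV p (ext 0 q) (ext 0 b2) (ext 0 xi2) n =
   (z - VV p (ext 0 q) (ext 0 b1) (ext 0 xi) n) - dd W by rewrite -eV opprB addrA subrK.
apply: exactB => //; apply: exact_dd; apply: (homog_eq _ hW); lia.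
Qed.

Section Psi.
Variables B A : dga.
Variable psi : B -> A.
Hypothesis hpsi : dga_hom psi.

Lemma psiDZ c x y : psi (c *: x + y) = c *: psi x + psi y.
Proof. exact: (hom_linear hpsi). Qed.
Lemma psi0 : psi 0 = 0.
Proof.
have := psiDZ 1 0 0; rewrite !scale1r addr0 => h.
by apply: (addrI (psi 0)); rewrite addr0 -h.
Qed.
Lemma psiD x y : psi (x + y) = psi x + psi y.
Proof. by rewrite -[x]scale1r psiDZ !scale1r. Qed.
Lemma psiZ c x : psi (c *: x) = c *: psi x.
Proof. by rewrite -[c *: x]addr0 psiDZ psi0 addr0. Qed.
Lemma psiB x y : psi (x - y) = psi x - psi y.
Proof. by rewrite -scaleN1r psiD psiZ scaleN1r. Qed.

Lemma psi_value p n (q : 'I_n -> int) (b xi : 'I_n -> B) :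
  psi (massey_value p q b xi) = massey_value p q (fun i => psi (b i)) (fun i => psi (xi i)).
Proof.
rewrite /massey_value (big_morph psi psiD psi0); apply: eq_bigr => i _.
rewrite !(hom_mul hpsi) !(big_morph psi (hom_mul hpsi) (hom_one hpsi)).
congr (_ * _ * _); apply: eq_bigr => j _; exact: psiZ.
Qed.

Lemma psi_exact m x : exact_in m x -> exact_in m (psi x).
Proof.
move=> [hx [z [hz dz]]]; split; first exact: (hom_homog hpsi).
by exists (psi z); rewrite -(hom_dd hpsi) dz; split => //; apply: (hom_homog hpsi).
Qed.

Lemma psi_closed m x : closed_in m x -> closed_in m (psi x).
Proof.
by move=> [hx dx]; split; [apply: (hom_homog hpsi) | rewrite -(hom_dd hpsi) dx psi0].
Qed.

Lemma natural p n (q : 'I_n -> int) (a' : B) (b' : 'I_n -> B) z' :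
  massey_elem p q a' b' z' -> massey_elem p q (psi a') (fun i => psi (b' i)) (psi z').
Proof.
move=> [hz [xi [hxi hc]]]; split; first exact: psi_closed.
exists (fun i => psi (xi i)); split.
  move=> i; split; first by apply: (hom_homog hpsi); exact: (hxi i).1.
  by rewrite -(hom_dd hpsi) (hxi i).2 (hom_mul hpsi).
by move: hc; rewrite /cohom => /psi_exact; rewrite psiB psi_value.
Qed.

End Psi.

Lemma lift (B A : dga) (psi : B -> A) p n (q : 'I_n -> int) (a' : B) (b' : 'I_n -> B) z :
  quasi_iso psi -> massey_defined p q a' b' ->
  massey_elem p q (psi a') (fun i => psi (b' i)) z ->
  exists z', massey_elem p q a' b' z' /\ cohom (massey_deg p q) (psi z') z.
Proof.
move=> [hpsi hq] [hp [ha' [hb' hab]]] [hz [xi [hxi hc]]].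
have : forall i, exists x0, homog (p + q i - 1) x0 /\ dd x0 = a' * b' i.
  by move=> i; case: (hab i).
case/fin_all_exists => x0 hx0.
have : forall i, exists x : B, closed_in (p + q i - 1) x /\
    cohom (p + q i - 1) (psi x) (xi i - psi (x0 i)).
  move=> i; apply: (hq (p + q i - 1)).2; split.
    by apply: homogB; [exact: (hxi i).1 | apply: (hom_homog hpsi); exact: (hx0 i).1].
  by rewrite ddB (hxi i).2 -(hom_dd hpsi) (hx0 i).2 (hom_mul hpsi) subrr.
case/fin_all_exists => c hc'.
have : forall i, exists et, homog (p + q i - 1 - 1) et /\
    dd et = psi (c i) - (xi i - psi (x0 i)).
  by move=> i; case: (hc' i) => _ [].
case/fin_all_exists => et het.
pose xi' i := x0 i + c i.
have hxi' : forall i, homog (p + q i - 1) (xi' i) /\ dd (xi' i) = a' * b' i.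
  move=> i; split; first by apply: homogD; [exact: (hx0 i).1 | exact: (hc' i).1.1].
  by rewrite ddD (hx0 i).2 (hc' i).1.2 addr0.
have epsi : forall i, psi (xi' i) = xi i + dd (et i).
  move=> i; rewrite psiD // (het i).2 opprB [RHS]addrCA [xi i + _]addrCA subrr addr0.
  by rewrite addrC.
exists (massey_value p q b' xi'); split.
  split; first exact: (value_closed hp ha' hb' hxi').
  by exists xi'; split => //; rewrite /cohom subrr; apply: exact0.
have hpa : closed_in p (psi a') by apply: psi_closed.
have hpb : forall i, closed_in (q i) (psi (b' i)) by move=> i; apply: psi_closed.
have hbe := ext_hb hpb; have hxe := ext_hxi hxi.
have heta : forall j, homog (ee p (ext 0 q) j - 1) (ext 0 et j).
  move=> j; case: (extP n j) => [[i <-]|h]; first by rewrite /ee !ext_val; exact: (het i).1.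
  by rewrite !h; apply: homog0.
have [W [_ [hW [_ [eV _]]]]] := pertVV hp hpa.1 (fun j => (hbe j).1) (fun j => (hbe j).2)
   (fun j => (hxe j).1) (fun j => (hxe j).2) heta n.
move: hc; rewrite /cohom (psi_value hpsi) massey_valueE massey_valueE massey_degE => hc.
have eVV : VV p (ext 0 q) (ext 0 (fun i => psi (b' i))) (ext 0 (fun i => psi (xi' i))) n =
    VV p (ext 0 q) (ext 0 (fun i => psi (b' i))) (fun j => ext 0 xi j + dd (ext 0 et j)) n.
  apply: (proj1 (VV_ext p (ext 0 q) _)) => j hj; split => //.
  have -> : j = Ordinal hj by [].
  by rewrite !ext_val.
rewrite eVV -[_ - z](subrKA (VV p (ext 0 q) (ext 0 (fun i => psi (b' i))) (ext 0 xi) n)).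
apply: exactD; first by rewrite eV; apply: exact_dd; apply: (homog_eq _ hW); lia.
by have := exactN hc; rewrite opprB.
Qed.

Lemma prod_exact (D : dga) p k (x x' y y' : D) : ~~ odd (absz p) ->
  closed_in p x -> closed_in k y' ->
  exact_in p (x' - x) -> exact_in k (y' - y) -> exact_in (p + k) (x' * y' - x * y).
Proof.
move=> hp [hx dx] [hy dy] [_ [al [hal dal]]] [_ [be [hbe dbe]]].
have -> : x' * y' - x * y = dd (al * y' + x * be).
  rewrite ddD (dd_leibniz _ hal) (dd_leibniz _ hx) dy dx mulr0 scaler0 addr0 mul0r add0r.
  by rewrite (sgnz_even hp) scale1r dal dbe mulrBl mulrBr addrA subrK.
apply: exact_dd; apply: homogD.
  by apply: (homog_eq _ (homogM hal hy)); lia.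
by apply: (homog_eq _ (homogM hx hbe)); lia.
Qed.

Theorem lemma2p9 (B A : dga) (psi : B -> A) (Hpsi : quasi_iso psi) :
  (forall (p : int) (n : nat) (q : 'I_n -> int)
          (a : A) (b : 'I_n -> A) (a' : B) (b' : 'I_n -> B),
      massey_defined p q a b ->
      closed_in p a' -> (forall i, closed_in (q i) (b' i)) ->
      cohom p (psi a') a -> (forall i, cohom (q i) (psi (b' i)) (b i)) ->
      massey_defined p q a' b' /\
      cohom_image_eq psi (massey_deg p q)
        (massey_elem p q a' b') (massey_elem p q a b)) /\
  (forall (p : int) (n : nat) (q : 'I_n -> int) (a' : B) (b' : 'I_n -> B),
      massey_defined p q a' b' ->
      cohom_image_eq psi (massey_deg p q)
        (massey_elem p q a' b') (massey_elem p q (psi a') (fun i => psi (b' i)))).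
Proof.
have [hpsi hq] := Hpsi.
split; last first.
  move=> p n q a' b' hdef; split; first by move=> z'; apply: natural.
  by move=> z hz; apply: (lift Hpsi hdef hz).
move=> p n q a b a' b' [hp [ha [hb hab]]] ha' hb' hca hcb.
have hdef' : massey_defined p q a' b'.
  split => //; split => //; split => // i.
  apply: (hq (p + q i)).1.
    split; first exact: (homogM ha'.1 (hb' i).1).
    by rewrite (dd_leibniz _ ha'.1) ha'.2 (hb' i).2 mul0r mulr0 scaler0 addr0.
  rewrite (hom_mul hpsi) -[_ * _](subrK (a * b i)).
  apply: exactD; last exact: hab.
  exact: (prod_exact hp ha (psi_closed hpsi (hb' i)) hca (hcb i)).
split => //; split.
  move=> z' hz'; have := natural hpsi hz'.
  apply: inv_elem => //; first exact: psi_closed.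
    by rewrite -opprB; apply: exactN.
  - by move=> i; apply: psi_closed.
  - by move=> i; rewrite -opprB; apply: exactN; exact: hcb.
move=> z hz; apply: (lift Hpsi hdef').
by apply: (inv_elem hp ha hca hb hcb hz).
Qed.
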